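(* Let $G$ be any game and $\epsilon\ge0$. The negotiation function $\mathsf{nego}$ of $G$ has a least $\epsilon$-fixed point for the pointwise order on requirements, namely $v\mapsto\inf\{\lambda(v)\mid\lambda\text{ is an }\epsilon\text{-fixed point of }\mathsf{nego}\}$.
   Context: A game is a tuple $G=(\Pi,V,(V_i)_{i\in\Pi},E,\mu)$ where $\Pi$ is a finite set of players, $(V,E)$ is a directed graph in which every vertex has at least one outgoing edge, $(V_i)_{i\in\Pi}$ is a partition of $V$ ($V_i$ = vertices controlled by player $i$), and $\mu=(\mu_i)_{i\in\Pi}:V^\omega\to\mathbb{R}^\Pi$ is the payoff function. Plays are infinite paths, histories finite nonempty paths; $\rho_{\ge n}=\rho_n\rho_{n+1}\cdots$. A strategy for player $i$ from $v_0$ maps each history $hv$ starting at $v_0$ with $v\in V_i$ to a successor of $v$; $-i=\Pi\setminus\{i\}$; a complete profile $\bar\sigma$ has outcome $\langle\bar\sigma\rangle$; for a history $hv$, $\bar\sigma_{\|hv}$ is the profile from $v$ given by $\sigma_{j\|hv}(h')=\sigma_j(hh')$. A requirement is a map $\lambda:V\to\overline{\mathbb{R}}=\mathbb{R}\cup\{\pm\infty\}$, ordered pointwise. A play $\rho$ is $\lambda$-consistent if for all $i$ and $n$ with $\rho_n\in V_i$, $\mu_i(\rho_{\ge n})\ge\lambda(\rho_n)$. For $v\in V_i$, a profile $\bar\sigma_{-i}$ from $v$ is $\lambda$-rational if there is a strategy $\sigma_i$ such that, with $\bar\sigma=(\bar\sigma_{-i},\sigma_i)$, for every history $hu$ from $v$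 compatible with $\bar\sigma_{-i}$, the play $\langle\bar\sigma_{\|hu}\rangle$ is $\lambda$-consistent; $\lambda\mathsf{Rat}(v)$ is the set of such profiles. The negotiation function is $\mathsf{nego}(\lambda)(v)=\inf_{\bar\sigma_{-i}\in\lambda\mathsf{Rat}(v)}\sup_{\sigma_i}\mu_i(\langle\bar\sigma_{-i},\sigma_i\rangle)$ for $v\in V_i$, with $\inf\emptyset=+\infty$. For $\epsilon\ge0$, a requirement $\lambda$ is an $\epsilon$-fixed point of $\mathsf{nego}$ if for every $v\in V$, $\lambda(v)-\epsilon\le\mathsf{nego}(\lambda)(v)\le\lambda(v)+\epsilon$ (with the conventions $\pm\infty\pm\epsilon=\pm\infty$). *)

(* Defs.v *)
From HB Require Import structures.
From mathcomp Require Import all_boot all_order all_algebra.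
From mathcomp Require Import boolp classical_sets reals ereal Rstruct.
From Stdlib Require Rdefinitions.
Notation R := Rdefinitions.R.

Set Implicit Arguments.
Unset Strict Implicit.
Unset Printing Implicit Defensive.

Import Order.TTheory GRing.Theory Num.Theory.
Local Open Scope classical_set_scope.
Local Open Scope ereal_scope.

Record game := Game {
  Players : finType;
  Vtx : Type;
  Edge : Vtx -> Vtx -> Prop;
  E_total : forall v, exists w, Edge v w;
  own : Vtx -> Players;                     (* v ∈ V_i  iff  owner v = i *)
  payoff : Players -> (nat -> Vtx) -> R
}.

Section Game.
Variable G : game.
Local Notation V := (Vtx G).
Local Notation Pl := (Players G).
Local Notation E := (@Edge G).
Local Notation owner := (@own G).
Local Notation mu := (@payoff G).

Definition requirement := V -> \bar R.

Fixpoint is_path (x : V) (t : seq V) : Prop :=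
  match t with
  | [::] => True
  | y :: t' => E x y /\ is_path y t'
  end.

Definition hist_from (v0 : V) (h : seq V) : Prop :=
  exists t, h = v0 :: t /\ is_path v0 t.

Definition last_of (h : seq V) (d : V) : V := last d h.

(* Profiles are encoded by their "move functions": a (partial) profile maps a
   history to the next vertex chosen by the owner of its last vertex.  A
   complete profile is one move function; a strategy of player i only matters
   on histories ending in V_i, and a profile of the other players only on
   histories ending outside V_i. *)
Definition movefun := seq V -> V.

Definition strategy_for (i : Pl) (v0 : V) (sigma : movefun) : Prop :=
  forall h, hist_from v0 h -> owner (last v0 h) = i -> E (last v0 h) (sigma h).

Definition coalition_profile (i : Pl) (v0 : V) (s : movefun) : Prop :=
  forall h, hist_from v0 h -> owner (last v0 h) != i -> E (last v0 h) (s h).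

Definition combine (i : Pl) (v0 : V) (s : movefun) (sigma : movefun) : movefun :=
  fun h => if owner (last v0 h) == i then sigma h else s h.

Fixpoint out_prefix (s : movefun) (v0 : V) (n : nat) : seq V :=
  match n with
  | 0 => [:: v0]
  | n'.+1 => let p := out_prefix s v0 n' in rcons p (s p)
  end.

Definition outcome (s : movefun) (v0 : V) : nat -> V :=
  fun n => last v0 (out_prefix s v0 n).

(* The residual profile \bar\sigma_{|hu}, a profile from u = last of hu:
   h' (starting at u) is mapped to s (h h'). *)
Definition residual (s : movefun) (hu : seq V) : movefun :=
  fun h' => match hu with
            | [::] => s h'
            | x :: t => s (belast x t ++ h')
            end.

Definition compatible (i : Pl) (s : movefun) (hu : seq V) : Prop :=
  forall k, (k.+1 < size hu)%N ->
    forall d : V, owner (nth d hu k) != i -> nth d hu k.+1 = s (take k.+1 hu).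

Definition suffix_play (rho : nat -> V) (n : nat) : nat -> V := fun m => rho (n + m)%N.

Definition consistent (lam : requirement) (rho : nat -> V) : Prop :=
  forall n, ((mu (owner (rho n)) (suffix_play rho n))%:E >= lam (rho n)).

Definition lamRat (lam : requirement) (v : V) (s : movefun) : Prop :=
  coalition_profile (owner v) v s /\
  exists sigma, strategy_for (owner v) v sigma /\
    forall hu, hist_from v hu -> compatible (owner v) s hu ->
      consistent lam (outcome (residual (combine (owner v) v s sigma) hu)
                              (last v hu)).

Definition nego (lam : requirement) : requirement := fun v =>
  ereal_inf [set ereal_sup [set (mu (owner v)
                                   (outcome (combine (owner v) v s sigma) v))%:E
                           | sigma in [set sigma | strategy_for (owner v) v sigma]]
            | s in [set s | lamRat lam v s]].

Definition eps_fixed_point (eps : R) (lam : requirement) : Prop :=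
  forall v, lam v - eps%:E <= nego lam v /\ nego lam v <= lam v + eps%:E.

Definition inf_eps_fixed_points (eps : R) : requirement := fun v =>
  ereal_inf [set lam v | lam in [set lam | eps_fixed_point eps lam]].

End Game.

(* Main.v *)
Require Import Defs.
From mathcomp Require Import all_boot all_order all_algebra.
From mathcomp Require Import boolp classical_sets reals ereal Rstruct.

Import Order.TTheory GRing.Theory Num.Theory.
Local Open Scope classical_set_scope.
Local Open Scope ereal_scope.

Lemma nego_ge (G : game) (lam : requirement G) v : lam v <= nego lam v.
Proof.
apply: le_ereal_inf_tmp => _ [s [Hs [sigma [Hsig Hc]]] <-].
have H1 : hist_from v [:: v] by exists [::].
have H2 : compatible (own v) s [:: v] by move=> [|k].
have := Hc _ H1 H2 0%N.
move=> Hle; apply: le_trans Hle _.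
apply: ereal_sup_ubound; exists sigma => //.
Qed.

Lemma nego_mono (G : game) (l1 l2 : requirement G) :
  (forall v, l1 v <= l2 v) -> forall v, nego l1 v <= nego l2 v.
Proof.
move=> Hl v; apply: ereal_inf_le_tmp => _ [s [Hs [sigma [Hsig Hc]]] <-].
exists s => //; split => //; exists sigma; split => // hu Hh Hco n.
exact: le_trans (Hl _) (Hc hu Hh Hco n).
Qed.

Theorem mainTheorem3 (G : game) (eps : R) (heps : (0 <= eps)%R) :
  @eps_fixed_point G eps (@inf_eps_fixed_points G eps) /\
  (forall lam : requirement G, eps_fixed_point eps lam ->
     forall v, @inf_eps_fixed_points G eps v <= lam v).
Proof.
have Hlb : forall lam : requirement G, eps_fixed_point eps lam ->
     forall v, @inf_eps_fixed_points G eps v <= lam v.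
  by move=> lam Hl v; apply: ereal_inf_lbound; exists lam.
split => // v; split.
  apply: le_trans _ (nego_ge _ _ v).
  by rewrite leeBlDr // leeDl // lee_fin.
rewrite -leeBlDr //.
apply: le_ereal_inf_tmp => _ [lam Hl <-].
rewrite leeBlDr //.
apply: le_trans (@nego_mono G _ _ (Hlb lam Hl) v) _.
exact: (Hl v).2.
Qed.
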